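(* Let $L=\{\ell_1,\dots,\ell_n\}$, $R=\{r_1,\dots,r_d\}$ and let $T_1,T_2$ be two compatible spanning trees of the complete bipartite graph on $L\sqcup R$, where $T_1$ has right degree vector $v$ and $T_2$ has right degree vector $v+e_p-e_q$ for some $p,q\in[d]$. Then $T_1\cap T_2$ contains a maximal tope with right degree vector $v-\mathbf{1}_{[d]\setminus\{p\}}$. Furthermore, if $\ell_s$ has degree $1$ in both $T_1$ and $T_2$, then $T_1$ and $T_2$ contain the same edge incident with $\ell_s$.
   Context: Graphs are identified with edge sets; right degree vector $=(\deg r_1,\dots,\deg r_d)$; $e_p$ is a standard unit vector and $\mathbf{1}_A$ the 0/1 indicator vector of $A\subseteq[d]$. Two graphs are compatible if for all $J\subseteq L$, $I\subseteq R$ such that both contain a perfect matching between $J$ and $I$, these perfect matchings are equal. A maximal tope with right degree vector $w$ is a bipartite graph on $L\sqcup R$ in which every node of $L$ has degree exactly $1$ and $r_i$ has degree $w_i$. *)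

(* Defs.v *)
(* Left nodes L = 'I_n, right nodes R = 'I_d.
   A bipartite graph on L ⊔ R is identified with its edge set {set 'I_n * 'I_d}. *)
From mathcomp Require Import all_boot all_order all_algebra.
Set Implicit Arguments. Unset Strict Implicit. Unset Printing Implicit Defensive.
Import GRing.Theory.
Local Open Scope ring_scope.

Section Bip.
Variables n d : nat.
Definition bgraph := {set 'I_n * 'I_d}.

Definition badj (G : bgraph) : rel ('I_n + 'I_d) :=
  fun x y => match x, y with
  | inl l, inr r => (l, r) \in G
  | inr r, inl l => (l, r) \in G
  | _, _ => false
  end.

Definition bconnected (G : bgraph) : Prop :=
  forall x y : 'I_n + 'I_d, connect (badj G) x y.

(* acyclic: no edge lies on a cycle, i.e. deleting any edge disconnects its endpoints *)
Definition bacyclic (G : bgraph) : Prop :=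
  forall e, e \in G -> ~~ connect (badj (G :\ e)) (inl e.1) (inr e.2).

Definition spanning_tree (G : bgraph) : Prop := bconnected G /\ bacyclic G.

Definition ldeg (G : bgraph) (l : 'I_n) : nat := #|[set e in G | e.1 == l]|.
Definition rdeg (G : bgraph) (r : 'I_d) : nat := #|[set e in G | e.2 == r]|.

Definition perfect_matching (J : {set 'I_n}) (I : {set 'I_d}) (M : bgraph) : Prop :=
  [/\ forall e, e \in M -> (e.1 \in J) && (e.2 \in I),
      forall l, l \in J -> ldeg M l = 1%N
    & forall r, r \in I -> rdeg M r = 1%N].

Definition compatible (G1 G2 : bgraph) : Prop :=
  forall (J : {set 'I_n}) (I : {set 'I_d}) (M1 M2 : bgraph),
    M1 \subset G1 -> perfect_matching J I M1 ->
    M2 \subset G2 -> perfect_matching J I M2 -> M1 = M2.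

Definition maximal_tope (w : 'I_d -> int) (G : bgraph) : Prop :=
  (forall l, ldeg G l = 1%N) /\ (forall r, (rdeg G r)%:Z = w r).
End Bip.

(* Main.v *)
Require Import Defs.
From mathcomp Require Import all_boot all_order all_algebra.
Set Implicit Arguments. Unset Strict Implicit. Unset Printing Implicit Defensive.

Section G.
Variables n d : nat.
Notation V := ('I_n + 'I_d)%type.
Implicit Types (G H T : bgraph n d) (x y z t : V) (e : 'I_n * 'I_d).

Definition endp e x := (x == inl e.1) || (x == inr e.2).

Lemma badj_sym G : symmetric (badj G).
Proof. by case=> a [b|b] //; case. Qed.

Lemma csym G x y : connect (badj G) x y = connect (badj G) y x.
Proof. exact: sym_connect_sym (badj_sym G) x y. Qed.

Lemma conn_mono G H x y : G \subset H -> connect (badj G) x y -> connect (badj H) x y.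
Proof.
move=> sGH; apply: connect_sub => a b ab; apply: connect1.
by move: ab; case: a => a; case: b => b //= /(subsetP sGH).
Qed.

Lemma badj_D1 G e x z : badj G x z -> ~~ badj (G :\ e) x z -> endp e x && endp e z.
Proof.
rewrite /endp; case: x => a; case: z => b //=; rewrite !inE => -> ;
  rewrite andbT negbK => /eqP <- /=; rewrite !eqxx ?orbT //.
Qed.

Lemma ends_conn H e : e \in H -> connect (badj H) (inl e.1) (inr e.2).
Proof. by case: e => a b; move=> he; apply: connect1. Qed.

Lemma endp_conn H e z x : e \in H -> endp e z -> endp e x -> connect (badj H) z x.
Proof.
move=> he; rewrite /endp => /orP[]/eqP-> /orP[]/eqP->; rewrite ?connect0 //.
  exact: ends_conn.
by rewrite csym; apply: ends_conn.
Qed.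

Lemma split_conn G e x y : connect (badj G) x y ->
  connect (badj (G :\ e)) x y \/ exists2 z, endp e z & connect (badj (G :\ e)) x z.
Proof.
move=> /connectP[p pp ->]; elim: p x pp => [|z p IH] x /=; first by left; apply: connect0.
move=> /andP[axz pz]; case: (boolP (badj (G :\ e) x z)) => bxz.
  case: (IH z pz) => [h|[w ew h]].
    by left; apply: connect_trans h; apply: connect1.
  by right; exists w => //; apply: connect_trans h; apply: connect1.
by right; exists x; [case/andP: (badj_D1 axz bxz) | apply: connect0].
Qed.
Lemma path_avoid T e x z s : endp e x -> path (badj T) z s -> x \notin z :: s ->
  path (badj (T :\ e)) z s.
Proof.
move=> ex; elim: s z => [|w s IH] z //= /andP[bzw ps].
rewrite !inE negb_or => /andP[xz]; rewrite negb_or => /andP[xw xs].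
rewrite IH ?inE ?negb_or ?xw //= andbT.
apply/negPn/negP => nb; case/andP: (badj_D1 bzw nb) => ez ew.
move: bzw ex ez ew xz xw; rewrite /endp.
move=> bzw /orP[]/eqP ex /orP[]/eqP ez /orP[]/eqP ew; subst;
  rewrite ?eqxx //= in bzw *.
Qed.

Lemma bad_unique T e1 e2 x t : e1 \in T -> e2 \in T -> endp e1 x -> endp e2 x ->
  connect (badj T) x t ->
  ~~ connect (badj (T :\ e1)) x t -> ~~ connect (badj (T :\ e2)) x t -> e1 = e2.
Proof.
move=> h1 h2 x1 x2 cxt n1 n2; apply/eqP/negPn/negP => ne.
have s12 : T :\ e2 :\ e1 \subset T :\ e1 by apply/subsetP=> w; rewrite !inE => /and3P[-> _ ->].
have s21 : T :\ e2 :\ e1 \subset T :\ e2 by apply/subsetP=> w; rewrite !inE => /and3P[_ -> ->].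
have i21 : e2 \in T :\ e1 by rewrite !inE eq_sym ne.
have i12 : e1 \in T :\ e2 by rewrite !inE ne.
rewrite csym in cxt; case: (split_conn e2 cxt) => [c|[w ew c]].
  by move: n2; rewrite csym c.
case: (split_conn e1 c) => [c'|[w' ew' c']].
  move: n1; rewrite csym (connect_trans (conn_mono s12 c')) //.
  exact: endp_conn ew x2.
move: n2; rewrite csym (connect_trans (conn_mono s21 c')) //.
exact: endp_conn ew' x1.
Qed.

Lemma badj_edge G x z : badj G x z -> exists e, [/\ e \in G, endp e x & endp e z].
Proof.
case: x => a; case: z => b //= h.
  by exists (a, b); rewrite /endp /= !eqxx ?orbT.
by exists (b, a); rewrite /endp /= !eqxx ?orbT.
Qed.

Lemma badj_neq G x z : badj G x z -> x != z.
Proof. by case: x => a; case: z => b. Qed.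

Lemma endp2_conn H e x z : endp e x -> endp e z -> x != z -> connect (badj H) x z ->
  connect (badj H) (inl e.1) (inr e.2).
Proof.
rewrite /endp => /orP[]/eqP-> /orP[]/eqP->; rewrite ?eqxx // => _.
by rewrite csym.
Qed.

Lemma bad_exists T x t : bacyclic T -> x != t -> connect (badj T) x t ->
  exists e, [/\ e \in T, endp e x & ~~ connect (badj (T :\ e)) x t].
Proof.
move=> ac xt c; case/connectP: c xt => p0 pp0 ->.
case: (shortenP pp0) => p pp up _.
case: p pp up => [|z s] /=; first by move=> _ _; rewrite eqxx.
move=> /andP[bxz ps] /andP[xn _] _.
case: (badj_edge bxz) => e [eT ex ez]; exists e; split => //.
apply/negP => c.
have c1 : connect (badj (T :\ e)) z (last z s).
  by apply/connectP; exists s => //; apply: path_avoid ex ps xn.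
have c2 : connect (badj (T :\ e)) x z by apply: connect_trans c _; rewrite csym.
by move/negP: (ac e eT); apply; apply: endp2_conn ex ez (badj_neq bxz) c2.
Qed.

Lemma endp_inl e l : endp e (inl l) = (e.1 == l).
Proof. by rewrite /endp orbF; apply/eqP/eqP => [[]|->]. Qed.

Lemma endp_inr e r : endp e (inr r) = (e.2 == r).
Proof. by rewrite /endp /=; apply/eqP/eqP => [[]|->]. Qed.

Lemma side T e p : spanning_tree T -> e \in T ->
  connect (badj (T :\ e)) (inl e.1) (inr p) = ~~ connect (badj (T :\ e)) (inr e.2) (inr p).
Proof.
case=> cn ac eT; apply/idP/idP.
  move=> c1; apply/negP => c2; move/negP: (ac e eT); apply.
  by apply: connect_trans c1 _; rewrite csym.
move=> /negP n2; case: (split_conn e (cn (inr p) (inl e.1))) => [c|[z ez c]].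
  by rewrite csym.
move: ez; rewrite /endp => /orP[]/eqP ez; subst z; first by rewrite csym.
by case: n2; rewrite csym.
Qed.

Definition root_tope T p :=
  [set e in T | ~~ connect (badj (T :\ e)) (inl e.1) (inr p)].

Lemma root_tope_sub T p : root_tope T p \subset T.
Proof. by apply/subsetP => e; rewrite inE => /andP[]. Qed.

Lemma root_tope_ldeg T p l : spanning_tree T -> ldeg (root_tope T p) l = 1%N.
Proof.
move=> [cn ac].
have [e0 [e0T e0x e0n]] := bad_exists ac (isT : inl l != inr p) (cn _ _).
apply/eqP/cards1P; exists e0; apply/setP => e; rewrite !inE.
apply/idP/idP.
  case/andP=> /andP[eT en] /eqP el; apply/eqP.
  apply: (bad_unique eT e0T _ e0x (cn (inl l) (inr p))) => //; first by rewrite endp_inl el.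
  by rewrite -el.
move/eqP->; rewrite e0T /=; move: e0x; rewrite endp_inl => /eqP el.
by rewrite el eqxx andbT.
Qed.

Lemma root_tope_rdeg T p r : spanning_tree T ->
  (rdeg (root_tope T p) r + (r != p))%N = rdeg T r.
Proof.
move=> st; have [cn ac] := st.
case: (eqVneq r p) => [->|rp] /=.
  rewrite addn0 /rdeg; apply: eq_card => e; rewrite !inE.
  case: (eqVneq e.2 p) => [ep|]; rewrite ?andbF ?andbT //.
  case eT: (e \in T) => //=; move: (ac e eT); by rewrite ep.
have rp' : inr r != inr p :> V by apply: contra rp => /eqP [->].
have [e0 [e0T e0x e0n]] := bad_exists ac rp' (cn _ _).
have e0r : e0.2 = r by move: e0x; rewrite endp_inr => /eqP.
rewrite /rdeg (cardsD1 e0 [set e in T | e.2 == r]) !inE e0T e0r eqxx addnC /=.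
rewrite add1n; congr (_ .+1); apply: eq_card => e; rewrite !inE.
case eT: (e \in T) => //=; rewrite ?andbF //.
case: (eqVneq e.2 r) => [er|]; rewrite ?andbF ?andbT //.
rewrite (side p st eT) negbK er.
case: (eqVneq e e0) => [->|ne] /=; first by rewrite (negbTE e0n).
apply/negPn/negP => n1; move/eqP: ne; apply.
by apply: (bad_unique eT e0T _ e0x (cn (inr r) (inr p))) => //; rewrite endp_inr er.
Qed.

Lemma pm_img (C : {set 'I_d}) (a : 'I_d -> 'I_n) (b : 'I_d -> 'I_d) :
  {in C &, injective a} -> {in C &, injective b} -> b @: C = C ->
  perfect_matching (a @: C) C [set (a c, b c) | c in C].
Proof.
move=> ia ib bC; split.
- move=> e /imsetP[c cC ->] /=; rewrite imset_f //=.
  by rewrite -bC imset_f.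
- move=> l /imsetP[c cC ->]; apply/eqP/cards1P; exists (a c, b c).
  apply/setP => e; rewrite !inE; apply/idP/idP.
    case/andP=> /imsetP[c' c'C ->] /= /eqP /(ia _ _ c'C cC) ->; by [].
  by move/eqP->; rewrite imset_f ?eqxx.
- move=> r; rewrite -{1}bC => /imsetP[c cC ->]; apply/eqP/cards1P; exists (a c, b c).
  apply/setP => e; rewrite !inE; apply/idP/idP.
    case/andP=> /imsetP[c' c'C ->] /= /eqP /(ib _ _ c'C cC) ->; by [].
  by move/eqP->; rewrite imset_f ?eqxx.
Qed.

Lemma funs_eq (T1 T2 : bgraph n d) (f1 f2 : 'I_n -> 'I_d) :
  compatible T1 T2 -> (forall l, (l, f1 l) \in T1) -> (forall l, (l, f2 l) \in T2) ->
  (forall r, #|[set l | f1 l == r]| = #|[set l | f2 l == r]|) -> f1 =1 f2.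
Proof.
move=> cp h1 h2 hc l0; apply/eqP/negPn/negP => nl0.
set D := [set l | f1 l != f2 l].
have l0D : l0 \in D by rewrite inE.
have cD r : #|[set l | f1 l == r] :&: D| = #|[set l | f2 l == r] :&: D|.
  have := hc r; rewrite -(cardsID D [set l | f1 l == r]) -(cardsID D [set l | f2 l == r]).
  have -> : [set l | f1 l == r] :\: D = [set l | f2 l == r] :\: D.
    apply/setP => l; rewrite !inE negbK.
    by case E: (f1 l == f2 l); rewrite ?(eqP E) ?andbF.
  by move/addIn.
pose S := f1 @: D.
pose ell r := odflt l0 [pick l in D | f1 l == r].
have ellP r : r \in S -> ell r \in D /\ f1 (ell r) = r.
  move=> /imsetP[l lD ->]; rewrite /ell; case: pickP => [l' /andP[l'D /eqP e]|none] //=.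
  by move: (none l); rewrite lD eqxx.
pose h r := f2 (ell r).
have hS r : r \in S -> h r \in S.
  move=> /ellP[lD _]; rewrite /h; set l := ell r.
  have : 0 < #|[set l' | f2 l' == f2 l] :&: D|.
    by apply/card_gt0P; exists l; rewrite in_setI lD andbT inE.
  rewrite -cD => /card_gt0P[l' ]; rewrite in_setI inE => /andP[/eqP <- l'D].
  exact: imset_f.
pose Pinv (C : {set 'I_d}) := [&& C != set0, h @: C \subset C & C \subset S].
have PS : Pinv S.
  apply/and3P; split => //.
    by apply/set0Pn; exists (f1 l0); apply: imset_f.
  by apply/subsetP => _ /imsetP[r rS ->]; apply: hS.
case: (minset_exists PS) => C /minsetP[PC minC] _.
case/and3P: PC => C0 hC CS.
have hCC : h @: C = C.
  apply: (minC (h @: C)) => //; apply/and3P; split => //.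
  - by rewrite imset_eq0.
  - exact: (imsetS h hC).
  - by apply: subset_trans hC CS.
have ih : {in C &, injective h} by apply/imset_injP; rewrite hCC.
have ie : {in C &, injective ell}.
  move=> c c' cC c'C e; have [_ <-] := ellP c (subsetP CS _ cC).
  by have [_ <-] := ellP c' (subsetP CS _ c'C); rewrite e.
have idC : (fun c => c) @: C = C.
  by apply/setP => c; apply/imsetP/idP => [[c' ? ->]|cC] //; exists c.
have E := cp (ell @: C) C [set (ell c, c) | c in C] [set (ell c, h c) | c in C].
have sub1 : [set (ell c, c) | c in C] \subset T1.
  apply/subsetP => _ /imsetP[c cC ->].
  by have [_ {2}<-] := ellP c (subsetP CS _ cC); apply: h1.
have sub2 : [set (ell c, h c) | c in C] \subset T2.
  by apply/subsetP => _ /imsetP[c cC ->]; apply: h2.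
have := E sub1 (pm_img ie (fun (u w : 'I_d) _ _ (k : u = w) => k) idC) sub2 (pm_img ie ih hCC).
case/set0Pn: C0 => c cC; have [cD1 fc] := ellP c (subsetP CS _ cC).
move=> EE; have : (ell c, c) \in [set (ell c, h c) | c in C] by rewrite -EE imset_f.
case/imsetP => c' c'C [] /(ie _ _ cC c'C) <- hc'.
by move: cD1 hc'; rewrite inE fc /h => ne e; rewrite -e eqxx in ne.
Qed.

Lemma tope_fun (M : bgraph n d) : (forall l, ldeg M l = 1%N) ->
  exists f : 'I_n -> 'I_d, forall e, (e \in M) = (e.2 == f e.1).
Proof.
move=> h.
have : forall l, exists g, [set e in M | e.1 == l] = [set g].
  by move=> l; apply/cards1P; rewrite -/(ldeg M l) h.
case/fin_all_exists => g hg; exists (fun l => (g l).2) => e.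
have g1 l : (g l).1 = l /\ g l \in M.
  have : g l \in [set e in M | e.1 == l] by rewrite hg set11.
  by rewrite inE => /andP[? /eqP].
apply/idP/idP.
  move=> eM; have : e \in [set e' in M | e'.1 == e.1] by rewrite inE eM eqxx.
  by rewrite hg inE => /eqP {1}->.
move=> /eqP e2; have [e1 gM] := g1 e.1.
suff -> : e = g e.1 by [].
by move: e2 e1 gM; case: e => a b; case: (g _) => a' b' /= -> ->.
Qed.

Lemma rdeg_fun (M : bgraph n d) f r : (forall e, (e \in M) = (e.2 == f e.1)) ->
  rdeg M r = #|[set l | f l == r]|.
Proof.
move=> hM; rewrite /rdeg -(card_imset _ (_ : injective (fun l => (l, f l)))); last first.
  by move=> a b [].
apply: eq_card => e; rewrite !inE hM; apply/idP/imsetP.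
  case/andP => /eqP e2 /eqP er; exists e.1; first by rewrite inE -e2 er.
  by move: e2 er; case: e => a b /= -> _.
by case=> l; rewrite inE => /eqP <- -> /=; rewrite eqxx.
Qed.

Lemma tope_eq (T1 T2 M1 M2 : bgraph n d) : compatible T1 T2 -> M1 \subset T1 -> M2 \subset T2 ->
  (forall l, ldeg M1 l = 1%N) -> (forall l, ldeg M2 l = 1%N) ->
  (forall r, rdeg M1 r = rdeg M2 r) -> M1 = M2.
Proof.
move=> cp s1 s2 l1 l2 rr.
have [f1 hf1] := tope_fun l1; have [f2 hf2] := tope_fun l2.
have fe : f1 =1 f2.
  apply: (funs_eq cp).
  - by move=> l; apply: (subsetP s1); rewrite hf1.
  - by move=> l; apply: (subsetP s2); rewrite hf2.
  by move=> r; rewrite -(rdeg_fun r hf1) -(rdeg_fun r hf2).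
by apply/setP => e; rewrite hf1 hf2 fe.
Qed.

Lemma same_star (M T : bgraph n d) s : M \subset T -> ldeg M s = 1%N -> ldeg T s = 1%N ->
  [set e in M | e.1 == s] = [set e in T | e.1 == s].
Proof.
move=> sMT hM hT; apply/eqP; rewrite eqEcard -/(ldeg M s) -/(ldeg T s) hM hT leqnn andbT.
by apply/subsetP => e; rewrite !inE => /andP[/(subsetP sMT) -> ->].
Qed.
End G.

From mathcomp Require Import zify.
Import GRing.Theory.
Local Open Scope ring_scope.

Theorem corollary2p10 (n d : nat) (T1 T2 : bgraph n d) (v : 'I_d -> int) (p q : 'I_d) :
  spanning_tree T1 -> spanning_tree T2 -> compatible T1 T2 ->
  (forall i, (rdeg T1 i)%:Z = v i) ->
  (forall i, (rdeg T2 i)%:Z = v i + (i == p)%:R - (i == q)%:R) ->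
  (exists M : bgraph n d, M \subset T1 :&: T2 /\
      maximal_tope (fun i => v i - (i != p)%:R) M) /\
  (forall s : 'I_n, ldeg T1 s = 1%N -> ldeg T2 s = 1%N ->
      [set e in T1 | e.1 == s] = [set e in T2 | e.1 == s]).
Proof.
move=> st1 st2 cp hv1 hv2.
have d1 r : (rdeg (root_tope T1 p) r)%:Z = v r - (r != p)%:R.
  rewrite -hv1 -(root_tope_rdeg p r st1) PoszD.
  by case: (r != p); rewrite /= ?addr0 ?addrK.
have d2 r : (rdeg (root_tope T2 q) r)%:Z = v r - (r != p)%:R.
  have := hv2 r; rewrite -(root_tope_rdeg q r st2) PoszD => h.
  have -> : (rdeg (root_tope T2 q) r)%:Z = v r + (r == p)%:R - (r == q)%:R - (r != q)%:Z.
    by rewrite -h addrK.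
  by case: (r == p); case: (r == q) => /=; lia.
have E : root_tope T1 p = root_tope T2 q.
  apply: (tope_eq cp (root_tope_sub _ _) (root_tope_sub _ _)).
  - by move=> l; apply: root_tope_ldeg.
  - by move=> l; apply: root_tope_ldeg.
  by move=> r; apply/eqP; rewrite -eqz_nat d1 d2.
split.
  exists (root_tope T1 p); split.
    by rewrite subsetI root_tope_sub E root_tope_sub.
  by split => [l|r]; [apply: root_tope_ldeg | apply: d1].
move=> s h1 h2.
rewrite -(same_star (root_tope_sub T1 p) (root_tope_ldeg p s st1) h1).
by rewrite -(same_star (root_tope_sub T2 q) (root_tope_ldeg q s st2) h2) E.
Qed.
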